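(* For every Greene–Kleitman chain $C$ of length $h\ge 5$ in $Q_n$ and any edge $f$ of $C$, there exist $h-1$ pairwise edge-disjoint flipping $4$-cycles, one between $C$ and each of its $h-1$ children, none of which uses the edge $f$.
   Context: $Q_n$ is the hypercube on $\{0,1\}^n$. Let $D$ be the set of bitstrings (including the empty string) with equally many $0$s and $1$s such that every prefix has at least as many $0$s as $1$s. A (Greene–Kleitman) chain of length $h$ is encoded as a string of length $n$ over $\{0,1,*\}$ of the form $u_0*u_1*\cdots*u_{h-1}*u_h$ with all $u_j\in D$; it is the path in $Q_n$ whose vertices are obtained by replacing the $*$s by $i$ ones followed by $h-i$ zeros, $i=0,1,\ldots,h$. A chain $C'$ of length $h-2$ is a child of a chain $C$ of length $h$ if $C'$ is obtained from $C$ by replacing two consecutive $*$s by $0$ and $1$, respectively; a chain of length $h$ has exactly $h-1$ children. A flipping $4$-cycle between two vertex-disjoint paths $P,P'$ is a $4$-cycle in $Q_n$ that shares exactly one edge with each of the two paths. *)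

(* Defs.v *)
From HB Require Import structures.
From mathcomp Require Import all_boot.
Set Implicit Arguments. Unset Strict Implicit. Unset Printing Implicit Defensive.

Inductive sym := S0 | S1 | Star.

Definition sym_eqb (a b : sym) : bool :=
  match a, b with S0, S0 | S1, S1 | Star, Star => true | _, _ => false end.
Lemma sym_eqP : Equality.axiom sym_eqb.
Proof. by case; case; constructor. Qed.
HB.instance Definition _ := hasDecEq.Build sym sym_eqP.

(* Vertices of Q_n: bitstrings (seq bool of size n), true = 1, false = 0. *)
Definition vertex := seq bool.

Definition adj (a b : vertex) : bool :=
  (size a == size b) && (count (fun p : bool * bool => p.1 != p.2) (zip a b) == 1).

Definition inD (u : seq sym) : bool :=
  [&& all (fun x => x != Star) u,
      count_mem S0 u == count_mem S1 u &
      all (fun m => count_mem S1 (take m u) <= count_mem S0 (take m u))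
          (iota 0 (size u).+1)].

(* split a word at its stars: u_0 * u_1 * ... * u_h  |->  [u_0; ...; u_h] *)
Fixpoint split_stars (w : seq sym) : seq (seq sym) :=
  match w with
  | [::] => [:: [::]]
  | Star :: s => [::] :: split_stars s
  | x :: s => match split_stars s with
              | [::] => [:: [:: x]]
              | p :: ps => (x :: p) :: ps
              end
  end.

Definition is_chain (w : seq sym) : bool := all inD (split_stars w).

Definition chain_len (w : seq sym) : nat := count_mem Star w.

Fixpoint fill_k (k i : nat) (w : seq sym) : vertex :=
  match w with
  | [::] => [::]
  | S0 :: s => false :: fill_k k i s
  | S1 :: s => true :: fill_k k i s
  | Star :: s => (k < i) :: fill_k k.+1 i s
  end.

Definition chain_vertex (w : seq sym) (i : nat) : vertex := fill_k 0 i w.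

Definition chain_path (w : seq sym) : seq vertex :=
  [seq chain_vertex w i | i <- iota 0 (chain_len w).+1].

Definition path_edges (p : seq vertex) : seq (vertex * vertex) := zip p (behead p).

Definition same_edge (e f : vertex * vertex) : bool :=
  ((e.1 == f.1) && (e.2 == f.2)) || ((e.1 == f.2) && (e.2 == f.1)).

Definition edge_in (e : vertex * vertex) (E : seq (vertex * vertex)) : bool :=
  has (same_edge e) E.

Fixpoint child_k (k j : nat) (w : seq sym) : seq sym :=
  match w with
  | [::] => [::]
  | Star :: s => (if k == j then S0 else if k == j.+1 then S1 else Star)
                   :: child_k k.+1 j s
  | x :: s => x :: child_k k j s
  end.

Definition child (j : nat) (w : seq sym) : seq sym := child_k 0 j w.

Definition cycle4 := (vertex * vertex * vertex * vertex)%type.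

Definition cyc_edges (c : cycle4) : seq (vertex * vertex) :=
  let: (a, b, c, d) := c in [:: (a, b); (b, c); (c, d); (d, a)].

Definition is_4cycle (n : nat) (c : cycle4) : Prop :=
  let: (a, b, c', d) := c in
  [/\ all (fun v : vertex => size v == n) [:: a; b; c'; d],
      uniq [:: a; b; c'; d] &
      all (fun e : vertex * vertex => adj e.1 e.2) (cyc_edges c)].

Definition vertex_disjoint (p q : seq vertex) : Prop :=
  forall v, v \in p -> v \notin q.

Definition flipping (n : nat) (c : cycle4) (p q : seq vertex) : Prop :=
  [/\ vertex_disjoint p q, is_4cycle n c,
      count (fun e => edge_in e (path_edges p)) (cyc_edges c) = 1 &
      count (fun e => edge_in e (path_edges q)) (cyc_edges c) = 1].

Definition edge_disjoint (c c' : cycle4) : Prop :=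
  forall e, e \in cyc_edges c -> ~~ edge_in e (cyc_edges c').

(* Main.v *)
Require Import Defs.
From mathcomp Require Import all_boot zify.
Ltac ifs := do ?[case: ifP => ?].
Set Implicit Arguments. Unset Strict Implicit. Unset Printing Implicit Defensive.

Fixpoint fillP (P : nat -> bool) (k : nat) (w : seq sym) : vertex :=
  match w with
  | [::] => [::]
  | S0 :: s => false :: fillP P k s
  | S1 :: s => true :: fillP P k s
  | Star :: s => P k :: fillP P k.+1 s
  end.

Lemma fill_kE k i w : fill_k k i w = fillP (fun t => t < i) k w.
Proof. by elim: w k => [|[] s IH] k //=; rewrite IH. Qed.

Lemma size_fillP P k w : size (fillP P k w) = size w.
Proof. by elim: w k => [|[] s IH] k //=; rewrite IH. Qed.

Lemma fillP_ext P Q k w : (forall t, P t = Q t) -> fillP P k w = fillP Q k w.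
Proof. by move=> H; elim: w k => [|[] s IH] k //=; rewrite IH ?H. Qed.

Lemma fillP_diff P Q k w :
  count (fun p : bool * bool => p.1 != p.2) (zip (fillP P k w) (fillP Q k w)) =
  count (fun t => P t != Q t) (iota k (count_mem Star w)).
Proof. by elim: w k => [|[] s IH] k //=; rewrite IH. Qed.

Definition Qf (j m t : nat) : bool :=
  if t == j then false else if t == j.+1 then true
  else (if t < j then t else t - 2) < m.

Lemma child_fill j m w k k' :
  k' = (if k <= j then k else if k == j.+1 then j else k - 2) ->
  fill_k k' m (child_k k j w) = fillP (Qf j m) k w.
Proof.
elim: w k k' => [|[] s IH] k k' Hk //=; try by rewrite IH.
subst k'; rewrite /Qf; case: (eqVneq k j) => [Hkj|Hkj] /=.
  by rewrite IH //; subst k; do ?[case: ifP => ?]; lia.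
case: (eqVneq k j.+1) => [Hkj1|Hkj1] /=.
  by rewrite IH //; subst k; do ?[case: ifP => ?]; lia.
rewrite IH; last by do ?[case: ifP => ?]; lia.
congr (_ :: _); do ?[case: ifP => ?]; lia.
Qed.

Lemma count_child j k w :
  count_mem Star (child_k k j w) =
  count (fun t => (t != j) && (t != j.+1)) (iota k (count_mem Star w)).
Proof.
elim: w k => [|[] s IH] k //=; rewrite ?add0n ?IH //.
case: (eqVneq k j) => [->|Hkj] /=.
  by [].
by case: (eqVneq k j.+1).
Qed.

Lemma count_zip_same (s : seq bool) :
  count (fun p : bool * bool => p.1 != p.2) (zip s s) = 0.
Proof. by elim: s => //= b s IH; rewrite IH eqxx. Qed.

Lemma mem_zip2 (T : eqType) (s t : seq T) x y :
  (x, y) \in zip s t -> x \in s /\ y \in t.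
Proof.
elim: s t => [|a s IH] [|b t] //=.
rewrite in_cons => /orP [/eqP [] -> ->|/IH [H1 H2]].
  by split; exact: mem_head.
by rewrite !in_cons H1 H2 !orbT; split.
Qed.

Lemma path_edges_map (f : nat -> vertex) a h :
  path_edges (map f (iota a h.+1)) = map (fun m => (f m, f m.+1)) (iota a h).
Proof.
elim: h a => [|h IH] a //=.
by move: (IH a.+1); rewrite /path_edges /= => ->.
Qed.

Lemma edge_in_mem e p : edge_in e (path_edges p) -> e.1 \in p /\ e.2 \in p.
Proof.
case/hasP => f Hf.
case: f Hf => f1 f2 /mem_zip2 [H1 /mem_behead H2].
by case/orP => /andP [/eqP -> /eqP ->].
Qed.

Lemma same_edgeE e f : same_edge e f -> (e.1 = f.1 /\ e.2 = f.2) \/ (e.1 = f.2 /\ e.2 = f.1).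
Proof. by case/orP => /andP [/eqP -> /eqP ->]; [left|right]. Qed.

Lemma count_iota_all (p : pred nat) a n :
  (forall t, a <= t < a + n -> p t) -> count p (iota a n) = n.
Proof.
move=> H; rewrite (@eq_in_count _ _ predT) ?count_predT ?size_iota //.
by move=> t; rewrite mem_iota => /H ->.
Qed.

Definition kf (h i j : nat) : nat :=
  if i <= 1 then (if j.+2 < h then j.+2 else 1 - i)
  else if j.+2 < i then j.+2 else if j.+3 < h then j.+3 else j.+3 - h.

Lemma kf_prop h i j : 5 <= h -> i < h -> j.+1 < h ->
  [/\ kf h i j < h, kf h i j != i, kf h i j != j & kf h i j != j.+1].
Proof. rewrite /kf => *; split; ifs; lia. Qed.

Lemma kf_inj h i j j' : 5 <= h -> i < h -> j.+1 < h -> j'.+1 < h ->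
  kf h i j = kf h i j' -> j = j'.
Proof. rewrite /kf; ifs; lia. Qed.

Section Main.
Variable w : seq sym.
Local Notation h := (count_mem Star w).

Definition X m := chain_vertex w m.
Definition Y j m := chain_vertex (child j w) m.

Lemma XE m : X m = fillP (fun t => t < m) 0 w.
Proof. exact: fill_kE. Qed.

Lemma YE j m : Y j m = fillP (Qf j m) 0 w.
Proof. by rewrite /Y /chain_vertex /child child_fill. Qed.

Lemma fill_eq_pt P Q : fillP P 0 w = fillP Q 0 w -> forall t, t < h -> P t = Q t.
Proof.
move=> E t Ht.
have := fillP_diff P Q 0 w; rewrite E count_zip_same => /esym /eqP.
have Hi : t \in iota 0 h by rewrite mem_iota; lia.
rewrite eqn0Ngt -has_count => /hasPn /(_ t Hi).
by move/negPn/eqP.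
Qed.

Lemma adj_fill P Q t0 : t0 < h -> (forall t, (P t != Q t) = (t == t0)) ->
  adj (fillP P 0 w) (fillP Q 0 w).
Proof.
move=> Ht H.
rewrite /adj !size_fillP eqxx fillP_diff (eq_count H) /=.
have := count_uniq_mem t0 (iota_uniq 0 h).
rewrite mem_iota add0n Ht => E.
by apply/eqP; rewrite -[RHS]E; apply: eq_count => t.
Qed.

Lemma neq_fill P Q t0 : t0 < h -> P t0 != Q t0 -> fillP P 0 w != fillP Q 0 w.
Proof.
move=> Ht H; apply/eqP => /fill_eq_pt /(_ t0 Ht) E.
by rewrite E eqxx in H.
Qed.

Lemma chain_len_child j : j.+1 < h -> chain_len (child j w) = h - 2.
Proof.
move=> Hj; rewrite /chain_len /child count_child.
have -> : h = j + (2 + (h - j.+2)) by lia.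
rewrite iotaD count_cat iotaD count_cat.
rewrite count_iota_all; last by move=> t; lia.
rewrite [X in _ + (X + _)]/= eqxx /=.
rewrite count_iota_all; last by move=> t; lia.
case: eqP; lia.
Qed.

Definition isX v := exists2 a, a <= h & v = X a.
Definition isY j v := exists m, v = Y j m.

Lemma memX v : v \in chain_path w -> isX v.
Proof.
by case/mapP => a; rewrite mem_iota add0n => Ha ->; exists a.
Qed.

Lemma memY j v : v \in chain_path (child j w) -> isY j v.
Proof. by case/mapP => a _ ->; exists a. Qed.

Lemma XnY j v : j.+1 < h -> isX v -> isY j v -> False.
Proof.
move=> Hj [a _ ->] [m]; rewrite XE YE => /fill_eq_pt E.
move: (E j ltac:(lia)) (E j.+1 Hj); rewrite /Qf eqxx.
case: eqP; first lia.
rewrite eqxx; lia.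
Qed.

Lemma Qf_j j m : Qf j m j = false.
Proof. by rewrite /Qf eqxx. Qed.
Lemma Qf_j1 j m : Qf j m j.+1 = true.
Proof. by rewrite /Qf eqxx; case: eqP => //; lia. Qed.
Lemma Qf_hi j m t : j.+1 < t -> Qf j m t = (t - 2 < m).
Proof. move=> H; rewrite /Qf; case: eqP; first lia. case: eqP; first lia. case: ifP; lia. Qed.

Lemma YY_lt j j' m m' : j < j' -> j'.+1 < h ->
  (forall t, t < h -> Qf j m t = Qf j' m' t) -> False.
Proof.
move=> Hjj Hj' E.
case: (eqVneq j' j.+1) => [Hj1|Hne].
  by move: (E j.+1 ltac:(lia)); rewrite Qf_j1 Hj1 Qf_j.
move: (E j' ltac:(lia)) (E j'.+1 Hj').
by rewrite Qf_j Qf_j1 !Qf_hi; lia.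
Qed.

Lemma YY j j' v : j.+1 < h -> j'.+1 < h -> isY j v -> isY j' v -> j = j'.
Proof.
move=> Hj Hj' [m ->] [m']; rewrite !YE => /fill_eq_pt E.
case: (ltngtP j j') => // H.
  by case: (YY_lt H Hj' E).
by case: (@YY_lt j' j m' m H Hj) => t Ht; rewrite E.
Qed.

Lemma XX a b : a <= h -> b <= h -> X a = X b -> a = b.
Proof.
move=> Ha Hb; rewrite !XE => /fill_eq_pt E.
case: (ltngtP a b) => // H.
  by move: (E a ltac:(lia)); lia.
by move: (E b ltac:(lia)); lia.
Qed.

Lemma YL j m : m <= j -> Y j m = fillP (fun t => (t < m) || (t == j.+1)) 0 w.
Proof. by rewrite YE => H; apply: fillP_ext => t; rewrite /Qf; ifs; lia. Qed.

Lemma YU j m : j <= m -> Y j m = fillP (fun t => (t < m.+2) && (t != j)) 0 w.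
Proof. by rewrite YE => H; apply: fillP_ext => t; rewrite /Qf; ifs; lia. Qed.

Lemma sizeX m : size (X m) = size w.
Proof. by rewrite XE size_fillP. Qed.
Lemma sizeY j m : size (Y j m) = size w.
Proof. by rewrite YE size_fillP. Qed.

Definition cycle j k : cycle4 :=
  if k < j then (X k, X k.+1, Y j k.+1, Y j k)
  else (X k, X k.+1, Y j k.-1, Y j (k-2)).

Ltac neqt a b := rewrite /=;
  first [ apply: (@neq_fill _ _ a); lia
        | apply: (@neq_fill _ _ b); lia ].
Ltac adjt a b :=
  first [ apply: (@adj_fill _ _ a); [lia | move=> t; lia]
        | apply: (@adj_fill _ _ b); [lia | move=> t; lia] ].

Lemma cycle_4 j k : j.+1 < h -> k < h -> k != j -> k != j.+1 ->
  is_4cycle (size w) (cycle j k).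
Proof.
move=> Hj Hk Hkj Hkj1; rewrite /cycle; case: ifP => Hlt.
  rewrite /is_4cycle /= !sizeX !sizeY eqxx; split => //.
    rewrite !in_cons !negb_or !in_nil /= !andbT !XE !YL; try lia.
    by rewrite !(andbA); repeat (apply/andP; split); neqt k (j.+1).
  rewrite !XE !YL; try lia.
  by apply/and5P; split => //; adjt k (j.+1).
rewrite /is_4cycle /= !sizeX !sizeY eqxx; split => //.
  rewrite !in_cons !negb_or !in_nil /= !andbT !XE !YU; try lia.
  by rewrite !(andbA); repeat (apply/andP; split); neqt k j.
have -> : k.-1 = (k - 2).+1 by lia.
rewrite !XE !YU; try lia.
by apply/and5P; split => //; adjt k j.
Qed.


Lemma isXX a : a <= h -> isX (X a).
Proof. by move=> Ha; exists a. Qed.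
Lemma isYY j m : isY j (Y j m).
Proof. by exists m. Qed.

Lemma notC1 j a v : j.+1 < h -> isY j v -> edge_in (v, a) (path_edges (chain_path w)) = false.
Proof. move=> Hj Hy; apply/negP => /edge_in_mem [/memX H _]; exact: XnY Hj H Hy. Qed.
Lemma notC2 j a v : j.+1 < h -> isY j v -> edge_in (a, v) (path_edges (chain_path w)) = false.
Proof. move=> Hj Hy; apply/negP => /edge_in_mem [_ /memX H]; exact: XnY Hj H Hy. Qed.
Lemma notY1 j a v : j.+1 < h -> isX v -> edge_in (v, a) (path_edges (chain_path (child j w))) = false.
Proof. move=> Hj Hx; apply/negP => /edge_in_mem [/memY H _]; exact: XnY Hj Hx H. Qed.
Lemma notY2 j a v : j.+1 < h -> isX v -> edge_in (a, v) (path_edges (chain_path (child j w))) = false.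
Proof. move=> Hj Hx; apply/negP => /edge_in_mem [_ /memY H]; exact: XnY Hj Hx H. Qed.

Lemma inC k : k < h -> edge_in (X k, X k.+1) (path_edges (chain_path w)).
Proof.
move=> Hk; rewrite /chain_path path_edges_map; apply/hasP.
exists (X k, X k.+1); last by rewrite /same_edge !eqxx.
by apply/mapP; exists k => //; rewrite mem_iota.
Qed.

Lemma inY j m : j.+1 < h -> m < h - 2 ->
  edge_in (Y j m.+1, Y j m) (path_edges (chain_path (child j w))).
Proof.
move=> Hj Hm; rewrite /chain_path chain_len_child // path_edges_map; apply/hasP.
exists (Y j m, Y j m.+1); last by rewrite /same_edge !eqxx orbT.
by apply/mapP; exists m => //; rewrite mem_iota.
Qed.

Lemma flip j k : j.+1 < h -> k < h -> k != j -> k != j.+1 ->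
  flipping (size w) (cycle j k) (chain_path w) (chain_path (child j w)).
Proof.
move=> Hj Hk Hkj Hkj1; split.
- move=> v /memX Hx; apply/negP => /memY Hy; exact: XnY Hj Hx Hy.
- exact: cycle_4.
- rewrite /cycle; case: ifP => Hlt /=.
    by rewrite inC // (notC2 _ Hj (isYY _ _)) (notC1 _ Hj (isYY _ _)) (notC1 _ Hj (isYY _ _)).
  by rewrite inC // (notC2 _ Hj (isYY _ _)) (notC1 _ Hj (isYY _ _)) (notC1 _ Hj (isYY _ _)).
- rewrite /cycle; case: ifP => Hlt /=.
    rewrite (notY1 _ Hj (isXX (ltnW Hk))) (notY1 _ Hj (isXX Hk)) inY //; last by lia.
    by rewrite (notY2 _ Hj (isXX (ltnW Hk))).
  have -> : k.-1 = (k - 2).+1 by lia.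
  rewrite (notY1 _ Hj (isXX (ltnW Hk))) (notY1 _ Hj (isXX Hk)) inY //; last by lia.
  by rewrite (notY2 _ Hj (isXX (ltnW Hk))).
Qed.

Definition kindO j (e : vertex * vertex) :=
  [/\ isY j e.1 \/ isY j e.2, isX e.1 \/ isY j e.1 & isX e.2 \/ isY j e.2].

Lemma cyc_kind j k e : k < h -> e \in cyc_edges (cycle j k) ->
  e = (X k, X k.+1) \/ kindO j e.
Proof.
move=> Hk; rewrite /cycle; case: ifP => Hlt;
rewrite /= !in_cons in_nil orbF => /or4P [] /eqP -> ; try by left.
all: right; split => /=; by [left; apply: isYY | right; apply: isYY
  | left; apply: isXX; lia | right; right; apply: isYY].
Qed.

Lemma YXY j j' v : j.+1 < h -> j'.+1 < h -> isY j v -> isX v \/ isY j' v -> j = j'.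
Proof.
move=> Hj Hj' Hy [Hx|Hy']; first by case: (XnY Hj Hx Hy).
exact: YY Hj Hj' Hy Hy'.
Qed.

Lemma edge_cmp j j' k k' e e' : j.+1 < h -> j'.+1 < h -> k < h -> k' < h ->
  (e = (X k, X k.+1) \/ kindO j e) -> (e' = (X k', X k'.+1) \/ kindO j' e') ->
  same_edge e e' -> k = k' \/ [/\ kindO j e, kindO j' e' & j = j'].
Proof.
move=> Hj Hj' Hk Hk' He He' /same_edgeE.
case: He => [->|[Ha Hb Hc]]; case: He' => [->|[Ha' Hb' Hc']] /= [[E1 E2]|[E1 E2]].
- by left; apply: XX E1; lia.
- have H1 : k = k'.+1 by apply: XX E1; lia.
  have H2 : k.+1 = k' by apply: XX E2; lia.
  lia.
- case: Ha' => H; [move: H; rewrite -E1 | move: H; rewrite -E2];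
    move/(XnY Hj' (isXX _)) => F; exfalso; apply: F; lia.
- case: Ha' => H; [move: H; rewrite -E2 | move: H; rewrite -E1];
    move/(XnY Hj' (isXX _)) => F; exfalso; apply: F; lia.
- case: Ha => H; [move: H; rewrite E1 | move: H; rewrite E2];
    move/(XnY Hj (isXX _)) => F; exfalso; apply: F; lia.
- case: Ha => H; [move: H; rewrite E1 | move: H; rewrite E2];
    move/(XnY Hj (isXX _)) => F; exfalso; apply: F; lia.
- right; split => //.
  case: Ha => H.
    by apply: (YXY Hj Hj' H); rewrite E1.
  by apply: (YXY Hj Hj' H); rewrite E2.
- right; split => //.
  case: Ha => H.
    by apply: (YXY Hj Hj' H); rewrite E1.
  by apply: (YXY Hj Hj' H); rewrite E2.
Qed.

Lemma kindO_CE j a : j.+1 < h -> a < h -> kindO j (X a, X a.+1) -> False.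
Proof.
move=> Hj Ha [[H|H] _ _] /=.
  by apply: (XnY Hj (isXX _) H); lia.
by apply: (XnY Hj (isXX _) H); lia.
Qed.

End Main.

Theorem lemma13 (n : nat) (w : seq sym) (i : nat) :
  size w = n -> is_chain w -> 5 <= chain_len w -> i < chain_len w ->
  let f := (chain_vertex w i, chain_vertex w i.+1) in
  exists cyc : nat -> cycle4,
    [/\ (forall j, j < (chain_len w).-1 ->
           flipping n (cyc j) (chain_path w) (chain_path (child j w))),
        (forall j k, j < (chain_len w).-1 -> k < (chain_len w).-1 -> j <> k ->
           edge_disjoint (cyc j) (cyc k)) &
        (forall j, j < (chain_len w).-1 -> ~~ edge_in f (cyc_edges (cyc j)))].
Proof.
move=> Hn _ Hh Hi f; subst n.
rewrite /chain_len in Hh Hi *.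
set h := count_mem Star w in Hh Hi *.
exists (fun j => cycle w j (kf h i j)); split.
- move=> j Hj.
  have [Hk1 Hk2 Hk3 Hk4] := @kf_prop h i j Hh Hi ltac:(lia).
  by apply: flip => //; lia.
- move=> j k Hj Hk Hne e He; apply/negP => /hasP [e' He' Hs].
  have [Hk1 _ _ _] := @kf_prop h i j Hh Hi ltac:(lia).
  have [Hk1' _ _ _] := @kf_prop h i k Hh Hi ltac:(lia).
  case: (edge_cmp (w:=w) (j:=j) (j':=k) ltac:(lia) ltac:(lia) Hk1 Hk1'
          (cyc_kind Hk1 He) (cyc_kind Hk1' He') Hs) => [E|[_ _ E]] //.
  by apply: Hne; apply: (kf_inj Hh Hi _ _ E); lia.
- move=> j Hj; apply/negP => /hasP [e' He' Hs].
  have [Hk1 Hk2 _ _] := @kf_prop h i j Hh Hi ltac:(lia).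
  case: (edge_cmp (w:=w) (j:=j) (j':=j) (k:=i) ltac:(lia) ltac:(lia) Hi Hk1
          (or_introl erefl) (cyc_kind Hk1 He') Hs) => [E|[F _ _]].
    by move: Hk2; rewrite -E eqxx.
  by apply: (kindO_CE (j:=j) (w:=w) ltac:(lia) Hi F).
Qed.
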